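(* Let $r,i,m$ be positive integers with $\gcd(r-i,2^m+1)=1$ and $\gcd(r,i(2^m-1))=1$, and let $b\in\mathbb{F}_{2^{2m}}^*$ satisfy $b^{\frac{2^{2m}-1}{\gcd(i(2^m-1),\,2^{2m}-1)}}\neq 1$ and $b^{2^m+1}=1$. Then the polynomial \[ f(x)=x^{i(2^m-1)+r}+bx^r \] induces a bijection of $\mathbb{F}_{2^{2m}}^*$ (and hence is a permutation polynomial of $\mathbb{F}_{2^{2m}}$).
   Context: A polynomial is a permutation polynomial of a finite field if it induces a bijection of that field. *)

(* Defs.v *)
From HB Require Import structures.
From mathcomp Require Import all_boot all_order all_algebra all_field.
Set Implicit Arguments. Unset Strict Implicit. Unset Printing Implicit Defensive.
Import GRing.Theory.
Local Open Scope ring_scope.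

Definition bij_on_units (F : fieldType) (f : F -> F) : Prop :=
  [/\ (forall x, x != 0 -> f x != 0),
      {in [pred x | x != 0] &, injective f} &
      (forall y, y != 0 -> exists2 x, x != 0 & f x = y)].

Definition perm_poly (F : fieldType) (p : {poly F}) : Prop :=
  bijective (fun x : F => p.[x]).

(* Main.v *)
Require Import Defs.
From HB Require Import structures.
From mathcomp Require Import all_boot all_order all_algebra all_field.
From mathcomp Require Import zify ring.
Import GRing.Theory.
Local Open Scope ring_scope.

Lemma pow1_coprime (F : fieldType) (w : F) (a n : nat) :
  coprime a n -> w ^+ a = 1 -> w ^+ n = 1 -> w = 1.
Proof.
move=> co wa wn.
case: a co wa => [|a] co wa.
  by move: co; rewrite /coprime gcd0n => /eqP n1; rewrite n1 expr1 in wn.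
have a0 : (0 < a.+1)%N by [].
have [k _ dk] := Bezoutl n a0.
have := expr_dvd wa dk; rewrite (eqP co) exprD expr1 mulnC exprM wn expr1n mulr1.
by [].
Qed.

Lemma pow_coprime (F : fieldType) (u v : F) (a n : nat) :
  v != 0 -> coprime a n -> u ^+ a = v ^+ a -> u ^+ n = v ^+ n -> u = v.
Proof.
move=> v0 co ha hn.
have e: forall k, u ^+ k = v ^+ k -> (u / v) ^+ k = 1.
  by move=> k hk; rewrite expr_div_n hk divff // expf_neq0.
have := @pow1_coprime _ _ _ _ co (e _ ha) (e _ hn).
by move/(congr1 ( *%R^~ v)); rewrite /= divfK // mul1r.
Qed.

Lemma cross_eq (F : fieldType) (u v : F) (a c : nat) : u != 0 -> v != 0 ->
  u ^+ a * v ^+ c = v ^+ a * u ^+ c -> u ^+ `|a - c| = v ^+ `|a - c|.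
Proof.
move=> u0 v0 e.
have [hca|hac] := leqP c a.
  rewrite distnEl //. 
  have ea : a = (a - c + c)%N by rewrite subnK.
  move: e; rewrite [in u ^+ a]ea [in v ^+ a]ea !exprD => e.
  have uc0 : u ^+ c * v ^+ c != 0 by rewrite mulf_neq0 // expf_neq0.
  apply: (mulIf uc0).
  rewrite mulrA e -mulrA; congr (_ * _); exact: mulrC.
have hac' : (a <= c)%N by exact: ltnW.
rewrite distnEr //.
have ec : c = (c - a + a)%N by rewrite subnK.
move: e; rewrite [in v ^+ c]ec [in u ^+ c]ec !exprD => e.
have uc0 : u ^+ a * v ^+ a != 0 by rewrite mulf_neq0 // expf_neq0.
apply: (mulIf uc0).
by rewrite mulrA [LHS]mulrC -e mulrCA.
Qed.

Theorem proposition4 (F : finFieldType) (r i m : nat) (b : F)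
  (hF : #|F| = (2 ^ (2 * m))%N)
  (hr : (0 < r)%N) (hi : (0 < i)%N) (hm : (0 < m)%N)
  (h1 : coprime `|r - i| (2 ^ m + 1))
  (h2 : coprime r (i * (2 ^ m - 1)))
  (hb0 : b != 0)
  (hb1 : b ^+ ((2 ^ (2 * m) - 1) %/ gcdn (i * (2 ^ m - 1)) (2 ^ (2 * m) - 1)) != 1)
  (hb2 : b ^+ (2 ^ m + 1) = 1) :
  let f : {poly F} := 'X ^+ (i * (2 ^ m - 1) + r) + b *: 'X ^+ r in
  bij_on_units (fun x => f.[x]) /\ perm_poly f.
Proof.
move=> f; rewrite {}/f.
have e2 : (2 ^ (2 * m) = 2 ^ m * 2 ^ m)%N by rewrite mulnC expnM mulnn.
have hF0 := hF; rewrite e2 in hF hb1.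
set q := (2 ^ m)%N in hF hb1 hb2 h1 h2 e2 *.
have q1 : (1 < q)%N by rewrite /q -{1}(expn0 2) ltn_exp2l.
have char2 : (2%N \in [pchar F]) by exact: (card_finPcharP hF0 (isT : prime 2)).
have frob : forall x y : F, (x + y) ^+ q = x ^+ q + y ^+ q.
  move=> x y; apply: exprDn_pchar; rewrite /q pnatX; apply/orP; left.
  by rewrite pnatE.
have ferm : forall x : F, x ^+ (q * q) = x by move=> x; rewrite -hF expf_card.
have unit1 : forall x : F, x != 0 -> (x ^+ (q - 1)) ^+ (q + 1) = 1.
  move=> x x0; apply: (mulIf x0); rewrite mul1r -exprM -exprSr.
  have -> : ((q - 1) * (q + 1)).+1 = (q * q)%N by clear -q1; nia.
  exact: ferm.
have pq : forall u : F, u ^+ (q + 1) = 1 -> u ^+ q * u = 1.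
  by move=> u; rewrite addn1 exprSr.
have A0 : forall u : F, u ^+ (q + 1) = 1 -> u ^+ i + b != 0.
  move=> u hu; apply/negP => /eqP hA.
  have hbu : b = u ^+ i.
    by apply/eqP; rewrite -(oppr_pchar2 char2 (u ^+ i)) -addr_eq0 addrC hA.
  move: hb1; rewrite hbu -exprM.
  set d := gcdn _ _.
  have : (q + 1 %| i * ((q * q - 1) %/ d))%N.
    have [k hk] : exists k, (i * (q - 1) = k * d)%N by apply/dvdnP; exact: dvdn_gcdl.
    have hE : ((q * q - 1) %/ d * d = q * q - 1)%N by apply: divnK; exact: dvdn_gcdr.
    set E := ((q * q - 1) %/ d)%N in hE *.
    have qq : ((q + 1) * (q - 1) = q * q - 1)%N by clear -q1; nia.
    have : (i * E * (q - 1) = (q + 1) * k * (q - 1))%N.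
      by rewrite mulnAC hk -mulnA (mulnC d) hE mulnAC qq mulnC.
    move/eqP; rewrite eqn_pmul2r ?subn_gt0 // => /eqP ->.
    exact: dvdn_mulr.
  by move/(expr_dvd hu) ->; rewrite eqxx.
set g := fun x : F => _.
have ev : forall x, g x = x ^+ r * ((x ^+ (q - 1)) ^+ i + b).
  move=> x; rewrite /g hornerD hornerZ !hornerXn exprD (mulnC i) exprM.
  by rewrite mulrDr mulrC (mulrC _ b).
have g0 : g 0 = 0 by rewrite ev expr0n eqn0Ngt hr mul0r.
have gnz : forall x, x != 0 -> g x != 0.
  by move=> x x0; rewrite ev mulf_neq0 ?expf_neq0 // A0 // unit1.
have key : forall x, x != 0 ->
    g x ^+ q * (x ^+ (q - 1)) ^+ i * b = (x ^+ (q - 1)) ^+ r * g x.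
  move=> x x0; set u := x ^+ (q - 1).
  have hu : u ^+ (q + 1) = 1 by exact: unit1.
  have xq : x ^+ q = u * x.
    by rewrite /u -exprSr subn1 prednK // ltnW.
  have h1' : (x ^+ r) ^+ q = u ^+ r * x ^+ r.
    by rewrite -exprM mulnC exprM xq exprMn.
  have e1 : (u ^+ i) ^+ q * u ^+ i = 1.
    by rewrite -exprM mulnC exprM -exprMn pq // expr1n.
  have e3 : b ^+ q * b = 1 by exact: pq.
  have h2' : (u ^+ i + b) ^+ q * u ^+ i * b = u ^+ i + b.
    rewrite frob !mulrDl e1 mul1r mulrAC e3 mul1r; exact: addrC.
  rewrite ev exprMn h1'.
  transitivity (u ^+ r * x ^+ r * ((u ^+ i + b) ^+ q * u ^+ i * b)).
    by rewrite !mulrA.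
  by rewrite h2' mulrA.
have ginj : injective g.
  move=> x y.
  have [->|x0] := eqVneq x 0.
    rewrite g0 => /esym/eqP; have [->//|y0] := eqVneq y 0.
    by rewrite (negbTE (gnz y y0)).
  have [->|y0] := eqVneq y 0.
    by rewrite g0 => /eqP; rewrite (negbTE (gnz x x0)).
  move=> gxy.
  have c0 := gnz x x0.
  have kx := key x x0; have ky := key y y0; rewrite -gxy in ky.
  set ux := x ^+ (q - 1) in kx ky *; set uy := y ^+ (q - 1) in ky *.
  set c := g x in kx ky c0 gxy.
  have ux0 : ux != 0 by rewrite expf_neq0.
  have uy0 : uy != 0 by rewrite expf_neq0.
  have cr : ux ^+ r * uy ^+ i = uy ^+ r * ux ^+ i.
    apply: (mulIf c0).
    have : uy ^+ i * (ux ^+ r * c) = ux ^+ i * (uy ^+ r * c).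
      by rewrite -kx -ky; ring.
    by rewrite !mulrA (mulrC (uy ^+ i)) (mulrC (ux ^+ i)).
  have uxy : ux = uy.
    apply: (@pow_coprime _ _ _ _ _ uy0 h1 (@cross_eq _ _ _ _ _ ux0 uy0 cr)).
    by rewrite (unit1 x x0) (unit1 y y0).
  have xyr : x ^+ r = y ^+ r.
    move: gxy; rewrite /c !ev -/ux -/uy uxy.
    by move/(mulIf (A0 _ (unit1 y y0))).
  have co : coprime r (q - 1) by move: h2; rewrite coprimeMr => /andP[].
  exact: (@pow_coprime _ _ _ _ _ y0 co xyr _).
have gbij : bijective g by exact: injF_bij.
split; last exact: gbij.
split.
- exact: gnz.
- by move=> x y _ _; exact: ginj.
- move=> y y0; case: gbij => h hK Kh; exists (h y); last exact: Kh.
  apply/eqP => hy0; move: y0; rewrite -(Kh y) hy0 g0 eqxx //.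
Qed.
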